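(* Under the ICMHD equations, $$\frac{D^2(\rho^{-1}\mathbf{B})}{Dt^2}-\frac{d^2\mathbf{B}}{ds^2}=-\frac{d}{ds}\big(\rho^{-1}\nabla\varpi\big),$$ equivalently $\frac{D^2\mathbf{B}_\rho}{Dt^2}=\frac{d}{ds}\frac{D\mathbf{u}}{Dt}=\mathbf{B}_\rho\cdot\nabla\Big(-\rho^{-1}\nabla p+\mathbf{J}\times\mathbf{B}_\rho\Big)$.
   Context: ICMHD setting: smooth fields on a domain of $\mathbb{R}^3$: velocity $\mathbf{u}$, density $\rho>0$, specific entropy $\sigma$, pressure $p$, magnetic field $\mathbf{B}$ with $\operatorname{div}\mathbf{B}=0$, current $\mathbf{J}=\operatorname{curl}\mathbf{B}$, satisfying $$\rho\frac{D\mathbf{u}}{Dt}=-\nabla p+\mathbf{J}\times\mathbf{B},\quad \partial_t\mathbf{B}=\operatorname{curl}(\mathbf{u}\times\mathbf{B}),\quad \frac{D\sigma}{Dt}=0,\quad \frac{D\rho^{-1}}{Dt}=\rho^{-1}\operatorname{div}\mathbf{u},$$ with $\frac{D}{Dt}=\partial_t+\mathbf{u}\cdot\nabla$. Notation: $\mathbf{B}_\rho=\rho^{-1}\mathbf{B}$, $\frac{d}{ds}=\mathbf{B}_\rho\cdot\nabla$ (applied componentwise to vectors), $\varpi=p+\tfrac12|\mathbf{B}|^2$. *)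

(* Defs.v *)
(* R : realType, space-time points in 'rV[R]_4.
   Coordinate 0 is time t; coordinate (lift ord0 k), k : 'I_3, is x_k. *)
From mathcomp Require Import all_boot all_order all_algebra.
From mathcomp Require Import all_classical all_reals all_analysis.
Set Implicit Arguments. Unset Strict Implicit. Unset Printing Implicit Defensive.
Import Order.TTheory GRing.Theory Num.Theory.
Import numFieldNormedType.Exports.
Local Open Scope ring_scope.
Local Open Scope classical_set_scope.

Section ICMHD.
Variable R : realType.
Notation pt := 'rV[R]_4.

Definition pd (i : 'I_4) (f : pt -> R) : pt -> R :=
  fun q => derive f q (delta_mx 0 i).

Fixpoint iterd (s : seq 'I_4) (f : pt -> R) : pt -> R :=
  match s with [::] => f | i :: s' => pd i (iterd s' f) end.

Definition smooth_on (U : set pt) (f : pt -> R) : Prop :=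
  forall (s : seq 'I_4) (q : pt), U q ->
    {for q, continuous (iterd s f)} /\
    (forall i : 'I_4, derivable (iterd s f) q (delta_mx 0 i)).

Definition dt (f : pt -> R) : pt -> R := pd ord0 f.
Definition dx (k : 'I_3) (f : pt -> R) : pt -> R := pd (lift ord0 k) f.

Definition vfield := 'I_3 -> pt -> R.

Definition Dt (u : vfield) (f : pt -> R) : pt -> R :=
  fun q => dt f q + \sum_(k < 3) u k q * dx k f q.

Definition divg (v : vfield) : pt -> R := fun q => \sum_(k < 3) dx k (v k) q.

Definition cross (a b : vfield) : vfield :=
  fun i q => a (ordS i) q * b (ordS (ordS i)) q - a (ordS (ordS i)) q * b (ordS i) q.

Definition curl (v : vfield) : vfield :=
  fun i q => dx (ordS i) (v (ordS (ordS i))) q - dx (ordS (ordS i)) (v (ordS i)) q.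

Definition Brho (rho : pt -> R) (B : vfield) : vfield := fun i q => (rho q)^-1 * B i q.

Definition dds (rho : pt -> R) (B : vfield) (f : pt -> R) : pt -> R :=
  fun q => \sum_(k < 3) Brho rho B k q * dx k f q.

Definition varpi (p : pt -> R) (B : vfield) : pt -> R :=
  fun q => p q + (\sum_(k < 3) B k q ^+ 2) / 2.

End ICMHD.

(* Main.v *)
Require Import Defs.
From mathcomp Require Import all_boot all_order all_algebra.
From mathcomp Require Import all_classical all_reals all_analysis.
From mathcomp Require Import ring lra.
Import Order.TTheory GRing.Theory Num.Theory.
Import numFieldNormedType.Exports.
Local Open Scope ring_scope.
Local Open Scope classical_set_scope.

Section S.
Context {R : realType}.
Notation pt := 'rV[R]_4.

Lemma ordS3 (i : 'I_3) : ordS (ordS (ordS i)) = i.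
Proof. apply: val_inj => /=. case: i => [[|[|[|]]] Hi] //=. Qed.

Lemma sum3a (F : 'I_3 -> R) : \sum_(k < 3) F k = F (inord 0) + F (inord 1) + F (inord 2).
Proof.
rewrite !big_ord_recr big_ord0 /= add0r.
by congr (F _ + F _ + F _); apply: val_inj; rewrite /= inordK.
Qed.

Lemma sum3 (i : 'I_3) (F : 'I_3 -> R) : \sum_(k < 3) F k = F i + F (ordS i) + F (ordS (ordS i)).
Proof.
rewrite sum3a.
case: i => [[|[|[|]]] Hi] //=.
- have -> : Ordinal Hi = inord 0 by apply: val_inj; rewrite /= inordK.
  have -> : ordS (inord 0) = inord 1 :> 'I_3 by apply: val_inj; rewrite /= !inordK.
  have -> : ordS (inord 1) = inord 2 :> 'I_3 by apply: val_inj; rewrite /= !inordK.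
  by [].
- have -> : Ordinal Hi = inord 1 by apply: val_inj; rewrite /= inordK.
  have -> : ordS (inord 1) = inord 2 :> 'I_3 by apply: val_inj; rewrite /= !inordK.
  have -> : ordS (inord 2) = inord 0 :> 'I_3 by apply: val_inj; rewrite /= !inordK.
  ring.
- have -> : Ordinal Hi = inord 2 by apply: val_inj; rewrite /= inordK.
  have -> : ordS (inord 2) = inord 0 :> 'I_3 by apply: val_inj; rewrite /= !inordK.
  have -> : ordS (inord 0) = inord 1 :> 'I_3 by apply: val_inj; rewrite /= !inordK.
  ring.
Qed.
Definition D1 (f : pt -> R) q := forall i : 'I_4, derivable f q (delta_mx 0 i).

Lemma pd_loc (U : set pt) f g i q : open U -> (forall x, U x -> f x = g x) -> U q ->
  pd i f q = pd i g q.
Proof.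
move=> oU fg Uq; rewrite /pd; apply: near_eq_derive.
apply: (filterS fg). exact: oU.
Qed.

Lemma D1_loc (U : set pt) f g q : open U -> (forall x, U x -> f x = g x) -> U q ->
  D1 f q -> D1 g q.
Proof.
move=> oU fg Uq df i; apply: near_eq_derivable (df i).
apply: (filterS fg). exact: oU.
Qed.

Section alg.
Variables (f g : pt -> R) (q : pt).
Hypotheses (df : D1 f q) (dg : D1 g q).
Lemma D1D : D1 (fun x => f x + g x) q. Proof. move=> i; exact: derivableD. Qed.
Lemma D1B : D1 (fun x => f x - g x) q. Proof. move=> i; exact: derivableB. Qed.
Lemma D1M : D1 (fun x => f x * g x) q. Proof. move=> i; exact: derivableM. Qed.
Lemma D1N : D1 (fun x => - f x) q. Proof. move=> i; exact: derivableN. Qed.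
Lemma D1V : f q != 0 -> D1 (fun x => (f x)^-1) q. Proof. move=> h i; exact: derivableV. Qed.
Lemma pdD i : pd i (fun x => f x + g x) q = pd i f q + pd i g q.
Proof. exact: deriveD. Qed.
Lemma pdB i : pd i (fun x => f x - g x) q = pd i f q - pd i g q.
Proof. exact: deriveB. Qed.
Lemma pdN i : pd i (fun x => - f x) q = - pd i f q.
Proof. exact: deriveN. Qed.
Lemma pdM i : pd i (fun x => f x * g x) q = pd i f q * g q + f q * pd i g q.
Proof. rewrite /pd (deriveM (df i) (dg i)) /GRing.scale /=; ring. Qed.
Lemma pdV i : f q != 0 -> pd i (fun x => (f x)^-1) q = - (f q)^-2 * pd i f q.
Proof. move=> h; exact: deriveV. Qed.
End alg.
Lemma D1C (c : R) q : D1 (fun _ => c) q. Proof. move=> i; exact: derivable_cst. Qed.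
Lemma pdC (c : R) i q : pd i (fun _ => c) q = 0. Proof. exact: derive_cst. Qed.

Lemma sum3f (F : 'I_3 -> pt -> R) : (fun x => \sum_(k < 3) F k x) =
  (fun x => F (inord 0) x + F (inord 1) x + F (inord 2) x).
Proof. by apply: funext => x; rewrite sum3a. Qed.

Lemma D1S (F : 'I_3 -> pt -> R) q : (forall k, D1 (F k) q) -> D1 (fun x => \sum_(k < 3) F k x) q.
Proof. move=> h; rewrite sum3f; apply: D1D; first apply: D1D; exact: h. Qed.
Lemma pdS (F : 'I_3 -> pt -> R) q i : (forall k, D1 (F k) q) ->
  pd i (fun x => \sum_(k < 3) F k x) q = \sum_(k < 3) pd i (F k) q.
Proof.
move=> h; rewrite sum3f sum3a pdD ?pdD //; try apply: D1D; exact: h.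
Qed.
Lemma near_ball (q : pt) (P : pt -> Prop) : (\forall x \near q, P x) ->
  exists2 e, 0 < e & forall y, `|q - y| < e -> P y.
Proof. by move/nbhs_normP => [e e0 H]; exists e => // y hy; apply: H. Qed.

Lemma line_der (F : pt -> R) x v s0 : derivable F (x + s0 *: v) v ->
  is_derive s0 1 (fun s => F (x + s *: v)) ('D_v F (x + s0 *: v)).
Proof.
move=> hd.
have E : (fun h : R => h^-1 *: (((fun s => F (x + s *: v)) \o shift s0) (h *: 1) - F (x + s0 *: v)))
  = (fun h => h^-1 *: ((F \o shift (x + s0 *: v)) (h *: v) - F (x + s0 *: v))).
  apply: funext => h /=; congr (_ *: (F _ - _)).
  by rewrite [h *: 1]mulr1 scalerDl addrCA addrA.
apply: DeriveDef.
- by rewrite /derivable E.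
- by rewrite /derive E.
Qed.

Lemma mvt1 (F : pt -> R) x v t : 0 < t ->
  (forall s, 0 <= s <= t -> derivable F (x + s *: v) v) ->
  exists2 s, 0 < s < t & F (x + t *: v) - F x = 'D_v F (x + s *: v) * t.
Proof.
move=> t0 hd.
have := @MVT R (fun s => F (x + s *: v)) (fun s => 'D_v F (x + s *: v)) 0 t t0.
case.
- move=> s; rewrite in_itv /= => /andP [h1 h2]; apply: line_der; apply: hd.
  by rewrite !ltW.
- apply: derivable_within_continuous => s; rewrite in_itv /= => /andP [h1 h2].
  by have [] := line_der _ _ _ _ (hd s _); [rewrite h1 h2|].
- move=> s; rewrite in_itv /= => /andP [h1 h2] E; exists s; first by rewrite h1 h2.
  by move: E; rewrite scale0r addr0 subr0.
Qed.

Lemma mvt2 (F : pt -> R) x y v t : 0 < t ->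
  (forall s, 0 <= s <= t -> derivable F (x + s *: v) v) ->
  (forall s, 0 <= s <= t -> derivable F (y + s *: v) v) ->
  exists2 s, 0 < s < t & (F (x + t *: v) - F (y + t *: v)) - (F x - F y)
     = ('D_v F (x + s *: v) - 'D_v F (y + s *: v)) * t.
Proof.
move=> t0 hx hy.
have := @MVT R (fun s => F (x + s *: v) - F (y + s *: v))
   (fun s => 'D_v F (x + s *: v) - 'D_v F (y + s *: v)) 0 t t0.
case.
- move=> s; rewrite in_itv /= => /andP [h1 h2].
  have hs : 0 <= s <= t by rewrite !ltW.
  have Hx := line_der _ _ _ _ (hx s hs); have Hy := line_der _ _ _ _ (hy s hs).
  exact: is_deriveB.
- apply: derivable_within_continuous => s; rewrite in_itv /= => /andP [h1 h2].
  have hs : 0 <= s <= t by rewrite h1 h2.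
  have [Hx _] := line_der _ _ _ _ (hx s hs); have [Hy _] := line_der _ _ _ _ (hy s hs).
  exact: derivableB.
- move=> s; rewrite in_itv /= => /andP [h1 h2] E; exists s; first by rewrite h1 h2.
  by move: E; rewrite !scale0r !addr0 subr0.
Qed.
Lemma sm_D1 (U : set pt) f s q : smooth_on U f -> U q -> D1 (iterd s f) q.
Proof. by move=> sf Uq i; have [_ h] := sf s q Uq; apply: h. Qed.
Arguments sm_D1 {U f} s {q}.

Lemma swap4 (A B C D : R) : A - B - (C - D) = A - C - (B - D).
Proof. ring. Qed.

Lemma cancel_tt (x y t : R) : t != 0 -> x * t * t = y * t * t -> x = y.
Proof. by move=> t0 /(mulIf t0) /(mulIf t0). Qed.

Lemma fin4 (a1 a2 b1 b2 : R) : b1 = b2 -> `|a1 - b1| < `|a1 - a2| / 2 ->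
  `|a2 - b2| < `|a1 - a2| / 2 -> False.
Proof.
move=> E H1 H2.
have : `|a1 - a2| <= `|a1 - b1| + `|a2 - b2|.
  have -> : a1 - a2 = (a1 - b1) - (a2 - b2) by rewrite E; ring.
  exact: ler_normB.
move: H1 H2; lra.
Qed.

Lemma schwarz (U : set pt) f i j q : open U -> smooth_on U f -> U q ->
  pd i (pd j f) q = pd j (pd i f) q.
Proof.
move=> oU sf Uq.
set a : pt := delta_mx 0 i; set b : pt := delta_mx 0 j.
set g1 := pd j (pd i f); set g2 := pd i (pd j f).
apply/eqP/negPn/negP => hne.
set eps := `|g1 q - g2 q| / 2.
have eps0 : 0 < eps by rewrite divr_gt0 // normr_gt0 subr_eq0 eq_sym.
have c1 : {for q, continuous g1} by have [h _] := sf [:: j; i] q Uq.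
have c2 : {for q, continuous g2} by have [h _] := sf [:: i; j] q Uq.
move/cvgrPdist_lt: c1 => /(_ eps eps0) N1.
move/cvgrPdist_lt: c2 => /(_ eps eps0) N2.
have NU : \forall x \near q, U x by exact: oU.
have [e e0 He] := near_ball q _ (filterI NU (filterI N1 N2)).
set c := `|a| + `|b| + 1.
have c0 : 0 < c by rewrite /c ltr_wpDl // addr_ge0.
set t := e / c.
have t0 : 0 < t by rewrite divr_gt0.
have inB : forall s r, 0 <= s <= t -> 0 <= r <= t ->
   U (q + s *: a + r *: b) /\ `|g1 q - g1 (q + s *: a + r *: b)| < eps /\
   `|g2 q - g2 (q + s *: a + r *: b)| < eps.
  move=> s r /andP [s0 st] /andP [r0 rt]; apply: He.
  have -> : q - (q + s *: a + r *: b) = - (s *: a + r *: b).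
    by rewrite -addrA opprD addrA subrr add0r.
  rewrite normrN; apply: (le_lt_trans (ler_normD _ _)); rewrite !normrZ !ger0_norm //.
  have : s * `|a| + r * `|b| <= t * `|a| + t * `|b|.
    by rewrite lerD // ler_wpM2r.
  move=> h; apply: (le_lt_trans h).
  have -> : e = t * c by rewrite /t divfK // gt_eqF.
  rewrite -mulrDr ltr_pM2l // /c ltrDl //.
have inU : forall s r, 0 <= s <= t -> 0 <= r <= t -> U (q + s *: a + r *: b).
  by move=> s r hs hr; have [] := inB s r hs hr.
have inU' : forall s r, 0 <= s <= t -> 0 <= r <= t -> U (q + r *: b + s *: a).
  by move=> s r hs hr; rewrite addrAC; exact: inU.
have tt : 0 <= t <= t by apply/andP; split => //; apply: ltW.
have t00 : (0:R) <= 0 <= t by apply/andP; split => //; apply: ltW.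
have [xi xit E1] : exists2 xi, 0 < xi < t &
   (f (q + t *: b + t *: a) - f (q + t *: a)) - (f (q + t *: b) - f q)
   = ('D_a f (q + t *: b + xi *: a) - 'D_a f (q + xi *: a)) * t.
  have := mvt2 f (q + t *: b) q a t t0.
  have h1 : forall s, 0 <= s <= t -> derivable f (q + t *: b + s *: a) a.
    by move=> s hs; exact: (sm_D1 [::] sf (inU' s t hs tt) i).
  have h2 : forall s, 0 <= s <= t -> derivable f (q + s *: a) a.
    move=> s hs; have := sm_D1 [::] sf (inU s 0 hs t00); rewrite scale0r addr0.
    by move=> /(_ i).
  by move=> /(_ h1 h2).
have xi1 : 0 <= xi <= t by case/andP: xit => ? ?; rewrite !ltW.
have [eta etat E2'] := mvt1 (pd i f) (q + xi *: a) b t t0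
   (fun s hs => sm_D1 [:: i] sf (inU xi s xi1 hs) j).
have E2 : 'D_a f (q + xi *: a + t *: b) - 'D_a f (q + xi *: a)
   = g1 (q + xi *: a + eta *: b) * t := E2'.
have [eta' eta't E3] : exists2 eta, 0 < eta < t &
   (f (q + t *: a + t *: b) - f (q + t *: b)) - (f (q + t *: a) - f q)
   = ('D_b f (q + t *: a + eta *: b) - 'D_b f (q + eta *: b)) * t.
  have := mvt2 f (q + t *: a) q b t t0.
  have h1 : forall s, 0 <= s <= t -> derivable f (q + t *: a + s *: b) b.
    by move=> s hs; exact: (sm_D1 [::] sf (inU t s tt hs) j).
  have h2 : forall s, 0 <= s <= t -> derivable f (q + s *: b) b.
    move=> s hs; have := sm_D1 [::] sf (inU' 0 s t00 hs); rewrite scale0r addr0.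
    by move=> /(_ j).
  by move=> /(_ h1 h2).
have eta1 : 0 <= eta' <= t by case/andP: eta't => ? ?; rewrite !ltW.
have [xi' xi't E4'] := mvt1 (pd j f) (q + eta' *: b) a t t0
   (fun s hs => sm_D1 [:: j] sf (inU' s eta' hs eta1) i).
have E4 : 'D_b f (q + eta' *: b + t *: a) - 'D_b f (q + eta' *: b)
   = g2 (q + eta' *: b + xi' *: a) * t := E4'.
have xi2 : 0 <= xi' <= t by case/andP: xi't => ? ?; rewrite !ltW.
have eta2 : 0 <= eta <= t by case/andP: etat => ? ?; rewrite !ltW.
have K1 : (f (q + t *: b + t *: a) - f (q + t *: a)) - (f (q + t *: b) - f q)
    = g1 (q + xi *: a + eta *: b) * t * t.
  by rewrite E1 (addrAC q (t *: b)) E2.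
have K2 : (f (q + t *: a + t *: b) - f (q + t *: b)) - (f (q + t *: a) - f q)
    = g2 (q + xi' *: a + eta' *: b) * t * t.
  have P1 : q + t *: a + eta' *: b = q + eta' *: b + t *: a by rewrite addrAC.
  have P2 : q + eta' *: b + xi' *: a = q + xi' *: a + eta' *: b by rewrite addrAC.
  rewrite E3 P1 E4 P2; reflexivity.
have D12 : (f (q + t *: b + t *: a) - f (q + t *: a)) - (f (q + t *: b) - f q)
   = (f (q + t *: a + t *: b) - f (q + t *: b)) - (f (q + t *: a) - f q).
  rewrite (addrAC q (t *: b)); exact: swap4.
have H := etrans (esym K1) (etrans D12 K2).
have Eq : g1 (q + xi *: a + eta *: b) = g2 (q + xi' *: a + eta' *: b).
  exact: (cancel_tt _ _ _ (negbT (gt_eqF t0)) H).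
have [_ [H1 _]] := inB xi eta xi1 eta2.
have [_ [_ H2]] := inB xi' eta' xi2 eta1.
exact: (fin4 _ _ _ _ Eq H1 H2).
Qed.
End S.
Arguments D1D {R f g q}. Arguments D1B {R f g q}. Arguments D1M {R f g q}.
Arguments D1N {R f q}. Arguments D1V {R f q}.
Arguments pdD {R f g q}. Arguments pdB {R f g q}. Arguments pdM {R f g q}.
Arguments pdN {R f q}. Arguments pdV {R f q}.
Arguments pdS {R F q} i. Arguments D1S {R F q}.
Arguments pd_loc {R U f g} i {q}. Arguments D1_loc {R U f g q}.
Arguments schwarz {R U f} i j {q}. Arguments sm_D1 {R U f} s {q}.



Ltac gen_pd := repeat match goal with |- context [pd ?i ?f ?x] => generalize (pd i f x); intro end.

Lemma pdS' {R : realType} {F : 'I_3 -> 'rV[R]_4 -> R} {q} : (forall k, D1 (F k) q) -> forall i,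
  pd i (fun x => \sum_(k < 3) F k x) q = \sum_(k < 3) pd i (F k) q.
Proof. move=> h i; exact: (pdS i h). Qed.
Lemma pd_loc' {R : realType} {U : set 'rV[R]_4} {f g q} : open U -> (forall x, U x -> f x = g x) -> U q ->
  forall i, pd i f q = pd i g q.
Proof. move=> oU fg Uq i; exact: (pd_loc i oU fg Uq). Qed.

Opaque D1.
Lemma solve3 {R : realType} {a b c : R} : a + b + c = 0 -> a = - (b + c).
Proof. by move=> h; apply/eqP; rewrite -subr_eq0 -h; apply/eqP; ring. Qed.
Lemma pdB' {R : realType} (f g : 'rV[R]_4 -> R) q i : D1 f q -> D1 g q ->
  pd i (fun x => f x - g x) q = pd i f q - pd i g q.
Proof. move=> df dg; exact: pdB. Qed.
Lemma pdD' {R : realType} (f g : 'rV[R]_4 -> R) q i : D1 f q -> D1 g q ->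
  pd i (fun x => f x + g x) q = pd i f q + pd i g q.
Proof. move=> df dg; exact: pdD. Qed.
Lemma pdM' {R : realType} (f g : 'rV[R]_4 -> R) q i : D1 f q -> D1 g q ->
  pd i (fun x => f x * g x) q = pd i f q * g q + f q * pd i g q.
Proof. move=> df dg; exact: pdM. Qed.
Lemma pdN' {R : realType} (f : 'rV[R]_4 -> R) q i : D1 f q ->
  pd i (fun x => - f x) q = - pd i f q.
Proof. move=> df; exact: pdN. Qed.
Lemma pdS'' {R : realType} (F : 'I_3 -> 'rV[R]_4 -> R) q i : (forall k, D1 (F k) q) ->
  pd i (fun x => \sum_(k < 3) F k x) q = \sum_(k < 3) pd i (F k) q.
Proof. move=> h; exact: (pdS i h). Qed.

Lemma sum3b (R : comRingType) (F : 'I_3 -> R) : \sum_(k < 3) F k = F (inord 0) + F (inord 1) + F (inord 2).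
Proof.
rewrite !big_ord_recr big_ord0 /= add0r.
by congr (F _ + F _ + F _); apply: val_inj; rewrite /= inordK.
Qed.
Lemma commAlg (R : comRingType) (b uu Df F0L F0R : 'I_3 -> R) (Du G : 'I_3 -> 'I_3 -> R) :
  (forall k, F0L k = F0R k) -> (forall j k, G j k = G k j) ->
  \sum_(k < 3) ((\sum_(j < 3) b j * Du j k) * Df k + b k * (F0L k + \sum_(j < 3) uu j * G j k))
  = \sum_(i < 3) b i * (F0R i + \sum_(j < 3) (Du i j * Df j + uu j * G i j)).
Proof.
move=> h0 hG; rewrite !sum3b !h0.
rewrite (hG (inord 1) (inord 0)) (hG (inord 2) (inord 0)) (hG (inord 2) (inord 1)).
ring.
Qed.

Lemma alg2b {R : comUnitRingType} (a d c1 c2 b1 b2 : R) :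
  a^-1 * (- d + (c1 * b2 - c2 * b1)) = - (a^-1 * d) + (c1 * (a^-1 * b2) - c2 * (a^-1 * b1)).
Proof. ring. Qed.

Lemma half3 {R : numFieldType} (a1 b1 a2 b2 a3 b3 : R) :
  (a1 * b1 + b1 * a1 + (a2 * b2 + b2 * a2) + (a3 * b3 + b3 * a3)) / 2 = b1 * a1 + b2 * a2 + b3 * a3.
Proof.
have h2 : (2:R) != 0 by rewrite pnatr_eq0.
apply: (mulIf h2); rewrite divfK //; ring.
Qed.

Section Main.
Variable R : realType.
Notation pt := 'rV[R]_4.
Variables (U : set pt) (u B : vfield R) (rho p : pt -> R).
Hypotheses (oU : open U) (su : forall i, smooth_on U (u i)) (sB : forall i, smooth_on U (B i))
  (srho : smooth_on U rho) (sp : smooth_on U p) (rpos : forall q, U q -> 0 < rho q).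

Lemma Dt_mul f g q : D1 f q -> D1 g q ->
  Dt u (fun x => f x * g x) q = Dt u f q * g q + f q * Dt u g q.
Proof.
move=> df dg; rewrite /Dt /dt /dx (pdM df dg).
under eq_bigr => k _ do rewrite (pdM df dg).
rewrite !sum3a; gen_pd; ring.
Qed.

Lemma Dt_sum (F : 'I_3 -> pt -> R) q : (forall k, D1 (F k) q) ->
  Dt u (fun x => \sum_(k < 3) F k x) q = \sum_(k < 3) Dt u (F k) q.
Proof.
move=> dF; rewrite /Dt /dt /dx.
under eq_bigr => k _ do rewrite (pdS' dF).
rewrite (pdS' dF).
rewrite /Dt. rewrite !sum3a; gen_pd; ring.
Qed.

Lemma Dt_loc f g q : (forall x, U x -> f x = g x) -> U q -> Dt u f q = Dt u g q.
Proof.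
move=> fg Uq; rewrite /Dt /dt /dx (pd_loc' oU fg Uq).
by under eq_bigr => k _ do rewrite (pd_loc' oU fg Uq).
Qed.

Lemma dds_loc f g q : (forall x, U x -> f x = g x) -> U q -> dds rho B f q = dds rho B g q.
Proof.
move=> fg Uq; rewrite /dds /dx.
by under eq_bigr => k _ do rewrite (pd_loc' oU fg Uq).
Qed.

Hypotheses (divB : forall q, U q -> divg B q = 0)
  (mom : forall i q, U q -> rho q * Dt u (u i) q = - dx i p q + cross (curl B) B i q)
  (ind : forall i q, U q -> dt (B i) q = curl (cross u B) i q)
  (cont : forall q, U q -> Dt u (fun x => (rho x)^-1) q = (rho q)^-1 * divg u q).

Lemma Dr q : U q -> D1 (fun x => (rho x)^-1) q.
Proof. move=> Uq; apply: D1V; [exact: (sm_D1 [::] srho Uq) | exact: (negbT (gt_eqF (rpos q Uq)))]. Qed.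

Lemma Db' k q : U q -> D1 (Brho rho B k) q.
Proof. move=> Uq; rewrite /Brho; apply: D1M; [exact: (Dr _ Uq)|exact: (sm_D1 [::] (sB k) Uq)]. Qed.

Ltac solveD1g Uq sf := repeat match goal with
 | |- D1 (fun x => (rho x)^-1) _ => exact: (Dr _ Uq)
 | |- D1 (Brho rho B _) _ => rewrite /Brho
 | |- D1 (fun x => _ + _) _ => apply: D1D
 | |- D1 (fun x => _ - _) _ => apply: D1B
 | |- D1 (fun x => _ * _) _ => apply: D1M
 | |- D1 (fun x => - _) _ => apply: D1N
 | |- D1 (fun x => \sum_(k < 3) _) _ => apply: D1S => ?
 | |- D1 (fun _ => ?c) _ => exact: (D1C c _)
 | |- D1 (u ?k) _ => exact: (sm_D1 [::] (su k) Uq)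
 | |- D1 (B ?k) _ => exact: (sm_D1 [::] (sB k) Uq)
 | |- D1 rho _ => exact: (sm_D1 [::] srho Uq)
 | |- D1 p _ => exact: (sm_D1 [::] sp Uq)
 | |- D1 (pd ?j (u ?k)) _ => exact: (sm_D1 [:: j] (su k) Uq)
 | |- D1 (pd ?j (B ?k)) _ => exact: (sm_D1 [:: j] (sB k) Uq)
 | |- D1 (pd ?j rho) _ => exact: (sm_D1 [:: j] srho Uq)
 | |- D1 (pd ?j p) _ => exact: (sm_D1 [:: j] sp Uq)
 | |- D1 (fun x => u ?k x) _ => exact: (sm_D1 [::] (su k) Uq)
 | |- D1 (fun x => B ?k x) _ => exact: (sm_D1 [::] (sB k) Uq)
 | |- D1 (fun x => rho x) _ => exact: (sm_D1 [::] srho Uq)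
 | |- D1 (fun x => pd ?j (u ?k) x) _ => exact: (sm_D1 [:: j] (su k) Uq)
 | |- D1 (fun x => pd ?j (B ?k) x) _ => exact: (sm_D1 [:: j] (sB k) Uq)
 | |- D1 (fun x => pd ?j p x) _ => exact: (sm_D1 [:: j] sp Uq)
 | |- D1 (fun x => Brho rho B ?k x) _ => exact: (Db' k _ Uq)
 | |- D1 (pd ?j ?g) _ => exact: (sm_D1 [:: j] sf Uq)
 | |- D1 (fun x => pd ?j ?g x) _ => exact: (sm_D1 [:: j] sf Uq)
 | |- D1 (dx ?j ?g) _ => exact: (sm_D1 [:: lift ord0 j] sf Uq)
 | |- D1 (fun x => dx ?j ?g x) _ => exact: (sm_D1 [:: lift ord0 j] sf Uq)
 | |- D1 (fun x => ?g x) _ => exact: (sm_D1 [::] sf Uq)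
 | |- D1 ?g _ => exact: (sm_D1 [::] sf Uq)
 end.
Ltac solveD1 Uq := solveD1g Uq srho.


Lemma Dt_mul' f g q : D1 f q -> D1 g q ->
  Dt u (fun x => f x * g x) q = Dt u f q * g q + f q * Dt u g q.
Proof. exact: Dt_mul. Qed.

Lemma Walen i q : U q -> Dt u (Brho rho B i) q = dds rho B (u i) q.
Proof.
move=> Uq.
rewrite /Brho Dt_mul'; solveD1 Uq.
rewrite (cont q Uq) /Dt (ind i q Uq) /curl /cross /dds /divg /Brho.
cbv beta. rewrite !ordS3 /dx /dt.
rewrite !pdB'; solveD1 Uq.
rewrite !pdM'; solveD1 Uq.
have dB := divB q Uq; rewrite /divg /dx (sum3 i) in dB.
rewrite !(sum3 i) (solve3 dB).
gen_pd. ring.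
Qed.

Lemma commC f q : smooth_on U f -> U q ->
  Dt u (dds rho B f) q = dds rho B (Dt u f) q.
Proof.
move=> sf Uq.
rewrite /dds Dt_sum; last by move=> k; solveD1g Uq sf.
rewrite (eq_bigr (fun k => Dt u (Brho rho B k) q * dx k f q + Brho rho B k q * Dt u (dx k f) q));
  last by move=> k _; rewrite Dt_mul'; solveD1g Uq sf.
under eq_bigr => k _ do rewrite (Walen k _ Uq).
rewrite [RHS](eq_bigr (fun k => Brho rho B k q * (pd (lift ord0 k) (pd ord0 f) q +
   \sum_(j < 3) (pd (lift ord0 k) (u j) q * pd (lift ord0 j) f q +
                 u j q * pd (lift ord0 k) (pd (lift ord0 j) f) q)))); last first.
  move=> k _; congr (_ * _); rewrite /Dt /dt /dx pdD'; solveD1g Uq sf.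
  congr (_ + _); rewrite pdS''; last by move=> j; solveD1g Uq sf.
  by apply: eq_bigr => j _; rewrite pdM'; solveD1g Uq sf.
rewrite /Dt /dt /dds /dx /Brho.
exact: (commAlg _ (fun k => (rho q)^-1 * B k q) (fun j => u j q) (fun k => pd (lift ord0 k) f q)
  (fun k => pd ord0 (pd (lift ord0 k) f) q) (fun k => pd (lift ord0 k) (pd ord0 f) q)
  (fun j k => pd (lift ord0 j) (u k) q) (fun j k => pd (lift ord0 j) (pd (lift ord0 k) f) q)
  (fun k => schwarz ord0 (lift ord0 k) oU sf Uq)
  (fun j k => schwarz (lift ord0 j) (lift ord0 k) oU sf Uq)).

Qed.

Lemma DtU i x : U x ->
  Dt u (u i) x = - ((rho x)^-1 * dx i p x) + cross (curl B) (Brho rho B) i x.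
Proof.
move=> Ux.
have rx : rho x != 0 := negbT (gt_eqF (rpos x Ux)).
have -> : Dt u (u i) x = (rho x)^-1 * (rho x * Dt u (u i) x) by rewrite mulKf.
rewrite (mom i x Ux) /cross /Brho; exact: alg2b.
Qed.

Lemma ddsB f g q : D1 f q -> D1 g q ->
  dds rho B (fun x => f x - g x) q = dds rho B f q - dds rho B g q.
Proof.
move=> df dg; rewrite /dds /dx -sumrB; apply: eq_bigr => k _.
by rewrite (pdB' _ _ _ _ df dg) mulrBr.
Qed.

Lemma varpiU i x : U x ->
  (rho x)^-1 * dx i (varpi p B) x = dds rho B (B i) x - Dt u (u i) x.
Proof.
move=> Ux.
rewrite (DtU i x Ux).
have -> : varpi p B = fun y => p y + (\sum_(k < 3) B k y * B k y) * (fun _ => 2^-1) y.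
  by apply: funext => y; rewrite /varpi; under eq_bigr do rewrite expr2.
rewrite /dx pdD'; solveD1 Ux.
rewrite pdM'; solveD1 Ux.
rewrite pdC pdS''; last by move=> k; solveD1 Ux.
rewrite (eq_bigr (fun k => pd (lift ord0 i) (B k) x * B k x + B k x * pd (lift ord0 i) (B k) x));
  last by move=> k _; rewrite pdM'; solveD1 Ux.
rewrite /dds /cross /curl /Brho /dx !ordS3 !(sum3 i) half3 mulr0 addr0.
gen_pd; ring.
Qed.

Lemma main_sec i q : U q ->
    (Dt u (Dt u (Brho rho B i)) q - dds rho B (dds rho B (B i)) q
       = - dds rho B (fun x => (rho x)^-1 * dx i (varpi p B) x) q)
    /\ (Dt u (Dt u (Brho rho B i)) q = dds rho B (Dt u (u i)) q
     /\ dds rho B (Dt u (u i)) q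
        = dds rho B (fun x => - ((rho x)^-1 * dx i p x) + cross (curl B) (Brho rho B) i x) q).
Proof.
move=> Uq.
have W2 : Dt u (Dt u (Brho rho B i)) q = dds rho B (Dt u (u i)) q.
  rewrite (Dt_loc (Dt u (Brho rho B i)) (dds rho B (u i)) q (fun x Ux => Walen i x Ux) Uq).
  exact: (commC (u i) q (su i) Uq).
split; last split.
- rewrite W2 (dds_loc (fun x => (rho x)^-1 * dx i (varpi p B) x)
     (fun x => dds rho B (B i) x - Dt u (u i) x) q (fun x Ux => varpiU i x Ux) Uq).
  rewrite ddsB; first by rewrite opprB.
  + by rewrite /dds /dx; solveD1 Uq.
  + by rewrite /Dt /dt /dx; solveD1 Uq.
- exact: W2.
- exact: (dds_loc (Dt u (u i))
     (fun x => - ((rho x)^-1 * dx i p x) + cross (curl B) (Brho rho B) i x) q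
     (fun x Ux => DtU i x Ux) Uq).
Qed.

End Main.

Theorem mainTheorem6 (R : realType) (U : set 'rV[R]_4)
  (u B : vfield R) (rho sigma p : 'rV[R]_4 -> R) :
  open U ->
  (forall i, smooth_on U (u i)) -> (forall i, smooth_on U (B i)) ->
  smooth_on U rho -> smooth_on U sigma -> smooth_on U p ->
  (forall q, U q -> 0 < rho q) ->
  (forall q, U q -> divg B q = 0) ->
  (* momentum: rho Du/Dt = -grad p + J x B, J = curl B *)
  (forall i q, U q ->
     rho q * Dt u (u i) q = - dx i p q + cross (curl B) B i q) ->
  (* induction: d_t B = curl (u x B) *)
  (forall i q, U q -> dt (B i) q = curl (cross u B) i q) ->
  (* entropy: D sigma/Dt = 0 *)
  (forall q, U q -> Dt u sigma q = 0) ->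
  (* continuity: D rho^-1/Dt = rho^-1 div u *)
  (forall q, U q -> Dt u (fun x => (rho x)^-1) q = (rho q)^-1 * divg u q) ->
  forall i q, U q ->
    (Dt u (Dt u (Brho rho B i)) q - dds rho B (dds rho B (B i)) q
       = - dds rho B (fun x => (rho x)^-1 * dx i (varpi p B) x) q)
    /\
    (Dt u (Dt u (Brho rho B i)) q = dds rho B (Dt u (u i)) q
     /\ dds rho B (Dt u (u i)) q
        = dds rho B (fun x => - ((rho x)^-1 * dx i p x)
                              + cross (curl B) (Brho rho B) i x) q).
Proof.
move=> oU su sB srho ssig sp rpos divB mom ind ent cont i q Uq.
eapply main_sec; eassumption.
Qed.
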